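(* Let $f:\mathbf{R}^d\times\mathbf{R}^n\to\mathbf{R}^d$ be Lipschitz continuous in the state variable with constant $L$, i.e. $\|f(x,a)-f(x',a)\|\le L\|x-x'\|$ for all $x,x'\in\mathbf{R}^d$ and all actions $a$, and odd in the action variable, i.e. $f(x,-a)=-f(x,a)$ for all $x,a$. Let $c>0$ and let $a:[0,2]\to[-c,c]^n$ be an action signal, and let $x:[0,2]\to\mathbf{R}^d$ be a solution of $\dot x(t)=f(x(t),a(t))$. Assume that $a(1+t)=-a(1-t)$ for all $t\in[0,1]$. Then $x(2-t)=x(t)$ for all $t\in[0,1]$.
   Context: This models teleoperation with a learned action map: $x(t)\in\mathbf{R}^d$ is the robot state (joint configuration), $a(t)\in\mathbf{R}^n$ with $n\ll d$ is the user's low-dimensional action, taking values in the bounded symmetric domain $[-c,c]^n$, and $f$ maps states and actions to state velocities, so the system evolves by $\dot x(t)=f(x(t),a(t))$. *)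

(* Defs.v *)
From HB Require Import structures.
From mathcomp Require Import all_boot all_order all_algebra.
From mathcomp Require Import all_classical all_reals all_analysis.
Set Implicit Arguments. Unset Strict Implicit. Unset Printing Implicit Defensive.
Import Order.TTheory GRing.Theory Num.Theory.
Import numFieldNormedType.Exports.
Local Open Scope ring_scope.

Definition enorm (R : realType) (k : nat) (v : 'rV[R]_k) : R :=
  Num.sqrt (\sum_(i < k) (v ord0 i) ^+ 2).

Definition in_box (R : realType) (n : nat) (c : R) (v : 'rV[R]_n) : Prop :=
  forall i : 'I_n, - c <= v ord0 i <= c.

(* Main.v *)
Require Import Defs.
From HB Require Import structures.
From mathcomp Require Import all_boot all_order all_algebra.
From mathcomp Require Import all_classical all_reals all_analysis.
From mathcomp Require Import ring lra.
Import Order.TTheory GRing.Theory Num.Theory.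
Import numFieldNormedType.Exports.
Local Open Scope ring_scope.
Local Open Scope classical_set_scope.
Lemma refl_filter (R : realType) : (fun s : R => 2 - s) @ 0^'+ --> (2:R)^'-.
Proof.
move=> P [e /= e0 He]; exists e => // s /= hs s0.
apply: He; last by lra.
by rewrite /ball_ /= opprB addrC subrK; move: hs; rewrite sub0r normrN.
Qed.
Lemma comp_deriv (R : realType) d (x : R -> 'rV[R]_d) (t : R) (D : 'rV[R]_d) (i : 'I_d) :
  is_derive t 1 x D -> is_derive t 1 (fun s => x s ord0 i) (D ord0 i).
Proof.
move=> hD.
have dx : derivable x t 1 by case: hD.
have := (derivable_mxP x t 1).1 dx ord0 i => di.
have := derivableP di.
have := derive_mx dx; rewrite derive_val => ->; rewrite mxE.
by [].
Qed.

Lemma refl_deriv (R : realType) (g : R -> R) (s dg : R) :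
  is_derive (2 - s) 1 g dg -> is_derive s 1 (fun u => g (2 - u)) (- dg).
Proof.
move=> hg.
have h2 : is_derive s 1 (fun u : R => 2 - u) (-1).
  have := @is_deriveB R R R (cst 2) id s 1 0 1 _ _.
  by rewrite sub0r; apply.
have := @is_derive1_comp R g (fun u => 2 - u) s dg (-1) hg h2.
by rewrite mulrN1.
Qed.

Lemma main_part (R : realType) (d n : nat)
  (f : 'rV[R]_d -> 'rV[R]_n -> 'rV[R]_d) (L : R)
  (hLip : forall (x x' : 'rV[R]_d) (u : 'rV[R]_n),
      enorm (f x u - f x' u) <= L * enorm (x - x'))
  (hodd : forall (x : 'rV[R]_d) (u : 'rV[R]_n), f x (- u) = - f x u)
  (a : R -> 'rV[R]_n)
  (x : R -> 'rV[R]_d)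
  (hxd : forall t : R, 0 < t < 2 -> is_derive t 1 x (f (x t) (a t)))
  (hsym : forall t : R, 0 <= t <= 1 -> a (1 + t) = - a (1 - t)) :
  forall t : R, 0 < t <= 1 -> x (2 - t) = x t.
Proof.
move=> t /andP[t0 t1].
pose z (i : 'I_d) (s : R) := x s ord0 i - x (2 - s) ord0 i.
pose w (i : 'I_d) (s : R) : R := (f (x s) (a s) - f (x (2 - s)) (a s)) ord0 i.
pose phi (s : R) := \sum_(i < d) (z i s) ^+ 2.
pose K := 1 + L ^+ 2.
pose dphi (s : R) : R := \sum_(i < d) (2%:R * z i s ^+ 1) *: w i s.
have dz : forall s : R, 0 < s <= 1 -> forall i : 'I_d, is_derive s 1 (z i) (w i s : R).
  move=> s /andP[s0 s1] i.
  have hs2 : 0 < s < 2 by apply/andP; split => //; lra.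
  have h2s : 0 < 2 - s < 2 by apply/andP; split; lra.
  have A := @comp_deriv R d x s _ i (hxd s hs2).
  have B := @refl_deriv R _ s _ (@comp_deriv R d x (2 - s) _ i (hxd (2 - s) h2s)).
  have E : a (2 - s) = - a s.
    have := hsym (1 - s); rewrite (_ : 1 + (1 - s) = 2 - s); last by ring.
    rewrite (_ : 1 - (1 - s) = s); last by ring.
    by apply; apply/andP; split; lra.
  have := is_deriveB A B.
  rewrite E hodd !mxE opprK => H.
  by apply: is_derive_eq H _; rewrite /w !mxE.
have dphiP : forall s : R, 0 < s <= 1 -> is_derive s 1 phi (dphi s).
  move=> s hs.
  have -> : phi = \sum_(i < d) (z i) ^+ 2.
    by rewrite fct_sumE; apply/funext => u; apply: eq_bigr => i _; rewrite exprfctE.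
  apply: is_derive_sum => i.
  exact: is_deriveX (dz s hs i).
pose psi (s : R) := expR (K * s) * phi s.
pose dpsi (s : R) := expR (K * s) * (K * phi s + dphi s).
have dpsiP : forall s : R, 0 < s <= 1 -> is_derive s 1 psi (dpsi s).
  move=> s hs.
  have hK : is_derive s 1 (fun u : R => K * u) K.
    have := @is_deriveZ R R R id K s 1 1 _.
    move=> /(_ (is_derive_id s 1)) H.
    by apply: (is_derive_eq H); exact: mulr1.
  have hE := @is_derive1_comp R expR (fun u : R => K * u) s _ _ (is_derive_expR _) hK.
  have := is_deriveM hE (dphiP s hs).
  move=> H; apply: (is_derive_eq H).
  rewrite /dpsi /= /GRing.scale /=; ring.
have key : forall s : R, 0 <= K * phi s + dphi s.
  move=> s.
  set Z := x s - x (2 - s).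
  set W := f (x s) (a s) - f (x (2 - s)) (a s).
  have hL : enorm W <= L * enorm Z by exact: hLip.
  have ez : enorm Z ^+ 2 = phi s.
    rewrite /enorm sqr_sqrtr; last by apply: sumr_ge0 => i _; exact: sqr_ge0.
    by apply: eq_bigr => i _; rewrite !mxE.
  have ew : enorm W ^+ 2 = \sum_(i < d) w i s ^+ 2.
    rewrite /enorm sqr_sqrtr; last by apply: sumr_ge0 => i _; exact: sqr_ge0.
    by [].
  have gz : 0 <= enorm Z by exact: sqrtr_ge0.
  have gw : 0 <= enorm W by exact: sqrtr_ge0.
  have hw2 : \sum_(i < d) w i s ^+ 2 <= L ^+ 2 * phi s.
    rewrite -ew -ez; nra.
  have hd : - (phi s + \sum_(i < d) w i s ^+ 2) <= dphi s.
    rewrite /dphi /phi -big_split /= -sumrN; apply: ler_sum => i _.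
    rewrite /GRing.scale /= expr1.
    have := sqr_ge0 (z i s + w i s); nra.
  rewrite /K; nra.
move: t1; rewrite le_eqVlt => /predU1P[->|tl1].
  by congr x; lra.
have cont : {within `[t, 1], continuous psi}.
  apply: derivable_within_continuous => s; rewrite in_itv /= => /andP[ts s1].
  have hs : 0 < s <= 1 by apply/andP; split => //; lra.
  by case: (dpsiP s hs).
have hd : forall s, s \in `]t, 1[%R -> is_derive s 1 psi (dpsi s).
  move=> s; rewrite in_itv /= => /andP[ts s1]; apply: dpsiP.
  by apply/andP; split; lra.
have [c hc E] := MVT tl1 hd cont.
have phi1 : phi 1 = 0.
  rewrite /phi /z; apply: big1 => i _.
  by rewrite (_ : (2 : R) - 1 = 1) ?subrr ?expr0n //; lra.
have dc : 0 <= dpsi c by rewrite /dpsi mulr_ge0 ?expR_ge0 ?key.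
have phit0 : 0 <= phi t by apply: sumr_ge0 => i _; exact: sqr_ge0.
have et := expR_gt0 (K * t).
have pt : phi t = 0.
  move: E; rewrite /psi phi1 mulr0 sub0r => E.
  have : expR (K * t) * phi t <= 0 by nra.
  by nra.
have hz := psumr_eq0P (fun i _ => sqr_ge0 (z i t)) pt.
apply/matrixP => i j; rewrite (ord1 i).
by have /eqP := hz j isT; rewrite sqrf_eq0 subr_eq0 => /eqP ->.
Qed.

Theorem theorem1 (R : realType) (d n : nat)
  (f : 'rV[R]_d -> 'rV[R]_n -> 'rV[R]_d) (L : R)
  (hLip : forall (x x' : 'rV[R]_d) (u : 'rV[R]_n),
      enorm (f x u - f x' u) <= L * enorm (x - x'))
  (hodd : forall (x : 'rV[R]_d) (u : 'rV[R]_n), f x (- u) = - f x u)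
  (c : R) (hc : 0 < c)
  (a : R -> 'rV[R]_n) (ha : forall t : R, 0 <= t <= 2 -> in_box c (a t))
  (x : R -> 'rV[R]_d)
  (hxc : {within `[0, 2], continuous x})
  (hxd : forall t : R, 0 < t < 2 -> is_derive t 1 x (f (x t) (a t)))
  (hsym : forall t : R, 0 <= t <= 1 -> a (1 + t) = - a (1 - t)) :
  forall t : R, 0 <= t <= 1 -> x (2 - t) = x t.
Proof.
have mp := @main_part R d n f L hLip hodd a x hxd hsym.
move=> t /andP[t0 t1].
move: t0; rewrite le_eqVlt => /predU1P[<-|tp]; last by apply: mp; apply/andP.
have [_ c0 c2] := (continuous_within_itvP x (ltr0Sn R 1)).1 hxc.
have G : (x \o (fun s => 2 - s)) @ 0^'+ --> x 2 := @cvg_comp _ _ _ _ _ _ _ _ (refl_filter R) c2.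
have G' : x @ (0:R)^'+ --> x 2.
  apply: cvg_trans G; apply: near_eq_cvg.
  near=> s; rewrite /= mp //; apply/andP; split.
    by near: s; exact: nbhs_right_gt.
  by near: s; apply: nbhs_right_le; lra.
rewrite subr0; exact: (cvg_unique _ G' c0).
Unshelve. all: by end_near.
Qed.
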